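(* Let $H=\left(\frac{3,-1}{\mathbb{Q}}\right)$, and let $d_1\neq d_2$ be square-free positive integers such that for $i=1,2$ the set $S_{d_i}$ is infinite. For $i=1,2$ let $\varphi_{d_i}:\mathbb{N}\to S_{d_i}$ be a bijection, let $a_i,b_i>0$ be rationals such that $a_i+b_i\sqrt{d_i}$ is a unit of infinite order in $\mathbb{Q}(\sqrt{d_i})$, and put $\psi_{d_i}(t,m)=(a_i+b_i\varphi_{d_i}(t))^m\in H$. Then for $t_1,t_2,m_1,m_2\in\mathbb{N}$ one has $\psi_{d_1}(t_1,m_1)=\psi_{d_2}(t_2,m_2)$ if and only if $m_1=m_2=0$.
   Context: $\mathbb{N}=\{0,1,2,\dots\}$. $H=\left(\frac{3,-1}{\mathbb{Q}}\right)$ is the quaternion $\mathbb{Q}$-algebra with basis $1,I,J,K=IJ$ and relations $I^2=3$, $J^2=-1$, $IJ=-JI$. For a square-free $d>0$, $S_d=\{xI+yJ+zK:(x,y,z)\in\mathbb{Z}^3,\ 3x^2-y^2+3z^2=d\}$; each $\omega\in S_d$ satisfies $\omega^2=d$. *)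

(* Defs.v *)
From Stdlib Require List.
From HB Require Import structures.
From mathcomp Require Import all_boot all_order all_algebra.
Set Implicit Arguments. Unset Strict Implicit. Unset Printing Implicit Defensive.
Import Order.TTheory GRing.Theory Num.Theory.
Local Open Scope ring_scope.

(* The quaternion algebra H = (3,-1 / Q): q0 + q1 I + q2 J + q3 K,
   I^2 = 3, J^2 = -1, IJ = -JI = K. *)
Record quat := Quat { q0 : rat; q1 : rat; q2 : rat; q3 : rat }.

Definition qone : quat := Quat 1 0 0 0.

(* Multiplication derived from I^2=3, J^2=-1, K^2=3, IJ=K, JI=-K,
   IK=3J, KI=-3J, JK=I, KJ=-I. *)
Definition qmul (a b : quat) : quat :=
  Quat (q0 a * q0 b + 3 * (q1 a * q1 b) - q2 a * q2 b + 3 * (q3 a * q3 b))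
       (q0 a * q1 b + q1 a * q0 b + q2 a * q3 b - q3 a * q2 b)
       (q0 a * q2 b + q2 a * q0 b + 3 * (q1 a * q3 b) - 3 * (q3 a * q1 b))
       (q0 a * q3 b + q3 a * q0 b + q1 a * q2 b - q2 a * q1 b).

Fixpoint qpow (a : quat) (m : nat) : quat :=
  match m with O => qone | S k => qmul (qpow a k) a end.

Definition qaffine (a b : rat) (w : quat) : quat :=
  Quat (a + b * q0 w) (b * q1 w) (b * q2 w) (b * q3 w).

Definition in_S (d : nat) (w : quat) : Prop :=
  exists x y z : int,
    w = Quat 0 x%:~R y%:~R z%:~R /\ 3 * x ^+ 2 - y ^+ 2 + 3 * z ^+ 2 = (d%:Z).

Definition S_infinite (d : nat) : Prop :=
  ~ exists l : seq quat, forall w, in_S d w -> List.In w l.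

Definition bij_onto_S (d : nat) (phi : nat -> quat) : Prop :=
  (forall t, in_S d (phi t)) /\ injective phi /\
  (forall w, in_S d w -> exists t, phi t = w).

Definition squarefree (d : nat) : Prop :=
  forall p : nat, prime p -> ~~ (p * p %| d)%N.

(* The quadratic field Q(sqrt d), elements x + y sqrt d as pairs. *)
Definition qd_mul (d : nat) (u v : rat * rat) : rat * rat :=
  (u.1 * v.1 + d%:R * (u.2 * v.2), u.1 * v.2 + u.2 * v.1).

Fixpoint qd_pow (d : nat) (u : rat * rat) (m : nat) : rat * rat :=
  match m with O => (1, 0) | S k => qd_mul d (qd_pow d u k) u end.

(* a + b sqrt d is a unit of the ring of integers of Q(sqrt d):
   it is an algebraic integer (trace 2a and norm a^2 - d b^2 in Z)
   with norm +-1. *)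
Definition is_int_unit (d : nat) (a b : rat) : Prop :=
  (exists k : int, 2 * a = k%:~R) /\
  (a ^+ 2 - d%:R * b ^+ 2 = 1 \/ a ^+ 2 - d%:R * b ^+ 2 = -1).

Definition infinite_order (d : nat) (a b : rat) : Prop :=
  forall m : nat, (0 < m)%N -> qd_pow d (a, b) m <> (1, 0).

(* Main.v *)
Require Import Defs.
From HB Require Import structures.
From mathcomp Require Import all_boot all_order all_algebra.
From mathcomp Require Import ring lra zify.
Import Order.TTheory GRing.Theory Num.Theory.
Local Open Scope ring_scope.

Lemma logn_le1 d p : (0 < d)%N -> squarefree d -> (logn p d <= 1)%N.
Proof.
move=> d0 sq; case pp: (prime p); last by rewrite lognE pp.
rewrite leqNgt; apply/negP => h.
have := sq p pp; rewrite -[(p * p)%N]/(p ^ 2)%N pfactor_dvdn //.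
by rewrite h.
Qed.

Lemma sqfree_eq d1 d2 A B : (0 < d1)%N -> (0 < d2)%N -> (0 < A)%N -> (0 < B)%N ->
  squarefree d1 -> squarefree d2 -> (d1 * A ^ 2 = d2 * B ^ 2)%N -> d1 = d2.
Proof.
move=> h1 h2 hA hB s1 s2 e; apply: eqn_from_log => // p.
have := congr1 (logn p) e.
rewrite !lognM ?expn_gt0 ?hA ?hB //. idtac.
have := @logn_le1 d1 p h1 s1; have := @logn_le1 d2 p h2 s2. lia.
Qed.

Lemma rat_pos_frac (Y : rat) : 0 < Y -> exists A B : nat, (0 < A)%N /\ (0 < B)%N /\ Y = A%:R / B%:R.
Proof.
move=> Y0.
have hn : (0 < numq Y)%R by rewrite numq_gt0.
have hd : (0 < denq Y)%R by rewrite denq_gt0.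
case En: (numq Y) hn => [n|n] //; case Ed: (denq Y) hd => [e|e] // hd hn.
exists n, e; split; first by [].
split; first by [].
have := numqE Y; rewrite En Ed /= => E.
have e0 : (e%:R : rat) != 0 by rewrite pnatr_eq0 -lt0n.
apply: (mulIf e0); rewrite mulfVK //.
Qed.
Lemma in_S_rat d w : in_S d w ->
  q0 w = 0 /\ 3 * q1 w ^+ 2 - q2 w ^+ 2 + 3 * q3 w ^+ 2 = d%:R.
Proof.
move=> [x [y [z [-> e]]]]; split => //=.
have := congr1 (fun k : int => (k%:~R : rat)) e.
rewrite /= rmorphD rmorphB /= !rmorphM /= => E; rewrite !expr2; exact: E.
Qed.

Lemma qpow_form d a b w : q0 w = 0 -> 3 * q1 w ^+ 2 - q2 w ^+ 2 + 3 * q3 w ^+ 2 = d%:R ->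
  forall m, qpow (qaffine a b w) m =
    Quat (qd_pow d (a, b) m).1 ((qd_pow d (a, b) m).2 * q1 w)
         ((qd_pow d (a, b) m).2 * q2 w) ((qd_pow d (a, b) m).2 * q3 w).
Proof.
move=> h0 hd; elim=> [|m IH] /=; first by rewrite !mul0r.
rewrite IH /qmul /qaffine /= h0 -hd; congr Quat; ring.
Qed.

Lemma qd_pos d a b : 0 < a -> 0 < b -> forall m,
  0 < (qd_pow d (a, b) m).1 /\ 0 <= (qd_pow d (a, b) m).2 /\
  ((0 < m)%N -> 0 < (qd_pow d (a, b) m).2).
Proof.
move=> ha hb; elim=> [|m [h1 [h2 h3]]] /=; first by rewrite ltr01 lexx.
have hd : 0 <= (d%:R : rat) by rewrite ler0n.
have p1 := mulr_gt0 h1 ha; have p2 := mulr_ge0 hd (mulr_ge0 h2 (ltW hb)).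
have p3 := mulr_gt0 h1 hb; have p4 := mulr_ge0 h2 (ltW ha).
split; first by lra.
split; first by lra.
by move=> _; lra.
Qed.

Lemma nat_eq_from_rat d1 d2 (Y1 Y2 : rat) : (0 < d1)%N -> (0 < d2)%N ->
  squarefree d1 -> squarefree d2 -> 0 < Y1 -> 0 < Y2 ->
  d1%:R * Y1 ^+ 2 = d2%:R * Y2 ^+ 2 -> d1 = d2.
Proof.
move=> h1 h2 s1 s2 y1 y2 e.
have [A [B [hA [hB EY1]]]] := @rat_pos_frac Y1 y1.
have [C [D [hC [hD EY2]]]] := @rat_pos_frac Y2 y2. rewrite EY1 EY2 in e.
apply: (@sqfree_eq d1 d2 (A * D)%N (C * B)%N) => //; try by rewrite muln_gt0; apply/andP.
apply/eqP; rewrite -(eqr_nat rat) !natrM; apply/eqP.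
have b0 : (B%:R : rat) != 0 by rewrite pnatr_eq0 -lt0n.
have d0 : (D%:R : rat) != 0 by rewrite pnatr_eq0 -lt0n.
rewrite -[LHS](_ : d1%:R * (A%:R/B%:R)^+2 * (B%:R*B%:R*(D%:R*D%:R)) = _); last by field.
rewrite e; field; exact: d0.
Qed.

Theorem mainTheorem5 (d1 d2 : nat) (phi1 phi2 : nat -> quat)
    (a1 b1 a2 b2 : rat) :
  (0 < d1)%N -> squarefree d1 -> (0 < d2)%N -> squarefree d2 -> d1 <> d2 ->
  S_infinite d1 -> S_infinite d2 ->
  bij_onto_S d1 phi1 -> bij_onto_S d2 phi2 ->
  0 < a1 -> 0 < b1 -> 0 < a2 -> 0 < b2 ->
  is_int_unit d1 a1 b1 -> infinite_order d1 a1 b1 ->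
  is_int_unit d2 a2 b2 -> infinite_order d2 a2 b2 ->
  forall t1 t2 m1 m2 : nat,
    qpow (qaffine a1 b1 (phi1 t1)) m1 = qpow (qaffine a2 b2 (phi2 t2)) m2
    <-> (m1 = 0%N /\ m2 = 0%N).
Proof.
move=> hd1 s1 hd2 s2 dne _ _ [B1 _] [B2 _] ha1 hb1 ha2 hb2 _ _ _ _ t1 t2 m1 m2.
split; last by case=> -> ->.
have [w10 w1d] := @in_S_rat _ _ (B1 t1).
have [w20 w2d] := @in_S_rat _ _ (B2 t2).
rewrite (qpow_form _ _ _ _ w10 w1d) (qpow_form _ _ _ _ w20 w2d).
have [_ [_ p1]] := @qd_pos d1 _ _ ha1 hb1 m1.
have [_ [_ p2]] := @qd_pos d2 _ _ ha2 hb2 m2.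
have z1 : m1 = 0%N -> (qd_pow d1 (a1, b1) m1).2 = 0 by move->.
have z2 : m2 = 0%N -> (qd_pow d2 (a2, b2) m2).2 = 0 by move->.
move: p1 p2 z1 z2.
set Y1 := (qd_pow d1 (a1, b1) m1).2; set Y2 := (qd_pow d2 (a2, b2) m2).2.
move=> p1 p2 z1 z2 E.
have e1 := congr1 q1 E; have e2 := congr1 q2 E; have e3 := congr1 q3 E.
move: e1 e2 e3 => /= e1 e2 e3.
have k1 : d1%:R * Y1 ^+ 2 = 3 * (Y1 * q1 (phi1 t1)) ^+ 2 - (Y1 * q2 (phi1 t1)) ^+ 2
   + 3 * (Y1 * q3 (phi1 t1)) ^+ 2 by rewrite -w1d; ring.
have k2 : d2%:R * Y2 ^+ 2 = 3 * (Y2 * q1 (phi2 t2)) ^+ 2 - (Y2 * q2 (phi2 t2)) ^+ 2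
   + 3 * (Y2 * q3 (phi2 t2)) ^+ 2 by rewrite -w2d; ring.
have k : d1%:R * Y1 ^+ 2 = d2%:R * Y2 ^+ 2 by rewrite k1 k2 e1 e2 e3.
have d1p : 0 < (d1%:R : rat) by rewrite ltr0n.
have d2p : 0 < (d2%:R : rat) by rewrite ltr0n.
case: (posnP m1) => [m10|m1p]; case: (posnP m2) => [m20|m2p] //.
- have := p2 m2p; rewrite z1 // in k => y2p.
  have : 0 < d2%:R * Y2 ^+ 2 by rewrite mulr_gt0 // exprn_gt0.
  by rewrite -k expr2 !mulr0 ltxx.
- have := p1 m1p; rewrite z2 // in k => y1p.
  have : 0 < d1%:R * Y1 ^+ 2 by rewrite mulr_gt0 // exprn_gt0.
  by rewrite k expr2 !mulr0 ltxx.
- exfalso; apply: dne; exact: (@nat_eq_from_rat d1 d2 _ _ hd1 hd2 s1 s2 (p1 m1p) (p2 m2p) k).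
Qed.
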